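(* In the setting described in the context, let $\{\alpha_n\}$ be a sequence of random variables with $\alpha_n\xrightarrow{P}\alpha>0$ as $n\to\infty$. Suppose C(iii), C(v), (W) and (U) hold. Then $$\int\mathbf{y}\,I(\mathbf{y}\in D_n(\alpha_n\mid\mathbf{x}))\,\mu_n(d\mathbf{y}\mid\mathbf{x})\xrightarrow{P}\int\mathbf{y}\,I(\mathbf{y}\in D(\alpha\mid\mathbf{x}))\,\mu(d\mathbf{y}\mid\mathbf{x})\quad\text{as }n\to\infty.$$
   Context: Setting: $\mathbf{Y}$ is a random vector in $\mathbb{R}^p$ and $\mathbf{X}$ a random element of a complete separable metric space $\mathcal{C}$; $(\mathbf{X}_i,\mathbf{Y}_i)$ are i.i.d. copies; $\mu(\cdot\mid\mathbf{x})$ is the conditional distribution of $\mathbf{Y}$ given $\mathbf{X}=\mathbf{x}$ for a fixed $\mathbf{x}$, and $\mu_n(B\mid\mathbf{x})=\sum_{i=1}^nI(\mathbf{Y}_i\in B)W_{i,n}(\mathbf{x})$ with nonnegative weights summing to $1$ that are measurable functions of $\mathbf{X}_1,\dots,\mathbf{X}_n$. $\rho(\cdot\mid\mathbf{x})$ is a uniformly bounded conditional depth function associated with $\mu(\cdot\mid\mathbf{x})$, $\rho_n(\cdot\mid\mathbf{x})$ its sample version defined from $\mu_n(\cdot\mid\mathbf{x})$; $D(\alpha\mid\mathbf{x})=\{\mathbf{y}:\rho(\mathbf{y}\mid\mathbf{x})\ge\alpha\}$, $D_n(\alpha\mid\mathbf{x})=\{\mathbf{y}:\rho_n(\mathbf{y}\mid\mathbf{x})\ge\alpha\}$.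 Conditions: (W) $\mu_n(\cdot\mid\mathbf{x})\to\mu(\cdot\mid\mathbf{x})$ weakly almost surely. (U) $\sup_{\mathbf{y}}|\rho_n(\mathbf{y}\mid\mathbf{x})-\rho(\mathbf{y}\mid\mathbf{x})|\xrightarrow{P}0$. C(iii): $\mu(\{\mathbf{y}:\rho(\mathbf{y}\mid\mathbf{x})=\alpha\}\mid\mathbf{x})=0$ for all $\alpha$. C(v): $\rho(\cdot\mid\mathbf{x})$ is continuous and $\rho(\mathbf{y}\mid\mathbf{x})\to0$ as $\|\mathbf{y}\|\to\infty$. *)

(* Defs.v *)
From HB Require Import structures.
From mathcomp Require Import all_boot all_order all_algebra.
From mathcomp Require Import all_classical all_reals all_analysis.
Set Implicit Arguments. Unset Strict Implicit. Unset Printing Implicit Defensive.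
Import Order.TTheory GRing.Theory Num.Theory.
Import numFieldNormedType.Exports.
Local Open Scope classical_set_scope.
Local Open Scope ring_scope.

(* R^p, written as row vectors 'rV[R]_p, equipped with its Borel sigma-algebra
   (sigma-algebra generated by the open sets of the product topology). *)
Definition Rp (R : realType) (p : nat) :=
  g_sigma_algebraType (@open 'rV[R]_p).

(* A family of events E_n is asymptotically negligible in (outer) probability:
   P^*(E_n) -> 0, i.e. for every delta > 0, eventually E_n is contained in
   a measurable set of probability at most delta. *)
Definition outer_prob_to0 {d} {Omega : measurableType d} {R : realType}
  (P : probability Omega R) (E : nat -> set Omega) : Prop :=
  forall delta : R, 0 < delta -> exists N : nat, forall n : nat, (N <= n)%N ->
    exists A : set Omega, measurable A /\ E n `<=` A /\ (P A <= delta%:E)%E.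

Definition cvg_in_prob {d} {Omega : measurableType d} {R : realType}
  {V : normedModType R} (P : probability Omega R)
  (Z : nat -> Omega -> V) (Z0 : Omega -> V) : Prop :=
  forall e : R, 0 < e ->
    outer_prob_to0 P (fun n => [set w | e < `|Z n w - Z0 w|]).

(* integral of f w.r.t. the weighted empirical measure
   mu_n(. | x)(w) = sum_{i<n} W_{i,n}(x)(w) delta_{Y_i(w)} *)
Definition emp_int {Omega : Type} {R : realType} {p : nat}
  (W : nat -> nat -> Omega -> R) (Y : nat -> Omega -> 'rV[R]_p)
  (n : nat) (w : Omega) (f : 'rV[R]_p -> R) : R :=
  \sum_(i < n) W n i w * f (Y i w).

(* Main.v *)
Require Import Defs.
From HB Require Import structures.
From mathcomp Require Import all_boot all_order all_algebra.
From mathcomp Require Import all_classical all_reals all_analysis.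
From mathcomp Require Import lra ring.
Import Order.TTheory GRing.Theory Num.Theory.
Import numFieldNormedType.Exports.
Local Open Scope classical_set_scope.
Local Open Scope ring_scope.
Lemma cont_meas {R: realType} {p} {f : 'rV[R]_p -> R} : continuous f ->
  measurable_fun (setT : set (Rp R p)) f.
Proof.
move=> /continuousP cf; apply: (measurability _ (measurable_realfun.RGenOpens.measurableE R)).
move=> _ [_ [a [b ->] <-]]. rewrite setTI.
apply: sub_sigma_algebra. apply: cf. exact: interval_open.
Qed.
Lemma coord_le {R : realType} {p} (y : 'rV[R]_p) j : `|y 0 j| <= `|y|.
Proof.
have -> : `|y| = mx_norm y by [].
rewrite mx_normrE.
exact: (le_bigmax _ (fun ij : 'I_1 * 'I_p => `|y ij.1 ij.2|) (0, j)).
Qed.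
Lemma norm_le {R : realType} {p} (y : 'rV[R]_p) e : 0 <= e ->
  (forall j, `|y 0 j| <= e) -> `|y| <= e.
Proof.
move=> e0 H; have -> : `|y| = mx_norm y by [].
rewrite mx_normrE; apply: bigmax_le => // -[i j] _.
by rewrite /= (ord1 i).
Qed.
Lemma coord_cont (R : realType) p j : continuous (fun y : 'rV[R]_p => y 0 j).
Proof.
move=> x A /= xA.
exists (fun _ j' => if j' == j then A else setT).
  move=> i0 j0; case: eqP => [->|_]; last exact: filterT.
  by rewrite (ord1 i0).
by move=> y /(_ 0 j); rewrite eqxx.
Qed.
Lemma ae_prob (R : realType) (d : measure_display) (Omega : measurableType d)
  (P : probability Omega R) (F : nat -> Omega -> R) :
  (forall n, measurable_fun setT (F n)) ->
  {ae P, forall w, F ^~ w @ \oo --> 0} ->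
  forall c delta : R, 0 < c -> 0 < delta -> exists N : nat, forall n, (N <= n)%N ->
  exists A, measurable A /\ [set w | c < `|F n w|] `<=` A /\ (P A <= delta%:E)%E.
Proof.
move=> mF [A0 [mA0 PA0 sA0]] c delta c0 d0.
pose E k := [set w | c < `|F k w|].
have mE k : measurable (E k).
  have mg : measurable_fun setT (fun w => `|F k w|).
    exact: measurableT_comp (@measurable_realfun.normr_measurable R setT) (mF k).
  have -> : E k = setT `&` (fun w => `|F k w|) @^-1` `]c, +oo[.
    rewrite /E; apply/seteqP; split => w /=; rewrite in_itv /= andbT //.
    by case.
  exact: mg.
pose B N := \bigcup_(k in [set k | (N <= k)%N]) E k.
have mB N : measurable (B N) by apply: bigcup_measurable => k _; exact: mE.
have niB : nonincreasing_seq B.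
  apply/nonincreasing_seqP => N; apply/subsetPset => w [k /= Nk Ek]; exists k => //.
  exact: ltnW.
have capB : \bigcap_N B N `<=` A0.
  move=> w Bw; apply: sA0 => /= Fw.
  have := cvgr_dist_lt _ _ Fw _ c0; case=> N _ HN.
  have [k /= Nk Ek] := Bw N I.
  by have := HN k Nk; rewrite sub0r normrN ltNge (ltW Ek).
have mcap : measurable (\bigcap_N B N).
  by apply: bigcap_measurable => *; [exists 0%N | exact: mB].
have P0 : P (\bigcap_N B N) = 0%E.
  apply/eqP; rewrite eq_le measure_ge0 andbT -PA0; apply: le_measure => //; exact/mem_set.
have B0 : (P (B 0%N) < +oo)%E.
  exact: le_lt_trans (probability_le1 P (mB 0%N)) (ltry _).
have cv : (P \o B) n @[n --> \oo] --> 0%E.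
  by rewrite -P0; exact: nonincreasing_cvg_mu B0 mB mcap niB.
have /fine_cvgP [Hfin Hcv] := cv.
have [N _ HN] := filterI Hfin (cvgr_dist_lt _ _ Hcv _ d0).
exists N => n Nn; exists (B N); split; first exact: mB.
split; first by move=> w Ew; exists n.
have [/= f1 f2] := HN N (leqnn N).
rewrite -(fineK f1) lee_fin; move: f2; rewrite sub0r normrN => f2.
exact: le_trans (ler_norm _) (ltW f2).
Qed.
Definition clamp {R : realType} (t : R) := Num.min 1 (Num.max 0 t).

Lemma clamp_ge0 {R : realType} (t : R) : 0 <= clamp t.
Proof. rewrite /clamp !(maxEle, minEle); repeat case: ifP; lra. Qed.
Lemma clamp_le1 {R : realType} (t : R) : clamp t <= 1.
Proof. rewrite /clamp !(maxEle, minEle); repeat case: ifP; lra. Qed.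
Lemma clamp1 {R : realType} (t : R) : 1 <= t -> clamp t = 1.
Proof. rewrite /clamp !(maxEle, minEle); repeat case: ifP; lra. Qed.
Lemma clamp0 {R : realType} (t : R) : t <= 0 -> clamp t = 0.
Proof. rewrite /clamp !(maxEle, minEle); repeat case: ifP; lra. Qed.
Lemma clamp_cont {R : realType} : continuous (@clamp R).
Proof.
apply: min_fun_continuous; first exact: cst_continuous.
apply: max_fun_continuous; first exact: cst_continuous.
by move=> x; exact: cvg_id.
Qed.

Definition hf {R : realType} (alpha eps t : R) := clamp ((t - alpha + eps) / eps).
Definition Tf {R : realType} (alpha eps t : R) := clamp (3 - `|t - alpha| / eps).

Lemma PA {R : realType} {alpha eps K u v rn a : R} {b : bool} :
  0 < eps -> 4 * eps <= alpha -> 0 <= K -> (alpha / 4 <= u -> `|v| <= K) ->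
  `|rn - u| <= eps -> `|a - alpha| <= eps -> b = (a <= rn) ->
  `|v * b%:R - v * hf alpha eps u| <= K * Tf alpha eps u.
Proof.
move=> e0 ea K0 Hv Hrn Ha ->.
have T0 : 0 <= K * Tf alpha eps u by rewrite mulr_ge0 // clamp_ge0.
have [Hc|Hc] := lerP (`|u - alpha|) (2 * eps).
  have -> : Tf alpha eps u = 1.
    apply: clamp1.
    have : `|u - alpha| / eps <= 2 by rewrite ler_pdivrMr //; lra.
    lra.
  rewrite mulr1 -mulrBr normrM.
  have hv : `|v| <= K by apply: Hv; move: Hc; rewrite ler_norml; lra.
  have h0 := clamp_ge0 ((u - alpha + eps) / eps).
  have h1 := clamp_le1 ((u - alpha + eps) / eps).
  have : `|((a <= rn)%R : bool)%:R - hf alpha eps u| <= 1.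
    rewrite /hf ler_norml; case: (a <= rn) => /=; lra.
  move=> H1; have := ler_pM (normr_ge0 v) (normr_ge0 _) hv H1.
  by rewrite mulr1.
move: Hc; rewrite ltr_normr => /orP[Hc|Hc].
- have -> : (a <= rn) = true.
    apply/idP; move: Hrn Ha; rewrite !ler_norml; lra.
  have -> : hf alpha eps u = 1.
    apply: clamp1; rewrite ler_pdivlMr //; lra.
  by rewrite subrr normr0.
- have -> : (a <= rn) = false.
    apply/negbTE; rewrite -ltNge; move: Hrn Ha; rewrite !ler_norml; lra.
  have -> : hf alpha eps u = 0.
    apply: clamp0; rewrite pmulr_lle0 ?invr_gt0 //; lra.
  by rewrite mulr0 subrr normr0.
Qed.
Lemma meas_le (R : realType) p (f : 'rV[R]_p -> R) (r : R) : continuous f ->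
  measurable [set y : Rp R p | f y <= r].
Proof.
move=> cf; have -> : [set y : Rp R p | f y <= r] = setT `&` f @^-1` [set` `]-oo, r]].
  by apply/seteqP; split => y /=; rewrite in_itv //= => -[].
exact: cont_meas cf measurableT _ (measurable_itv _).
Qed.
Lemma meas_ge (R : realType) p (f : 'rV[R]_p -> R) (r : R) : continuous f ->
  measurable [set y : Rp R p | r <= f y].
Proof.
move=> cf; have -> : [set y : Rp R p | r <= f y] = setT `&` f @^-1` [set` `[r, +oo[].
  by apply/seteqP; split => y /=; rewrite in_itv /= andbT // => -[].
exact: cont_meas cf measurableT _ (measurable_itv _).
Qed.

Lemma small_shell (R : realType) p (mu : probability (Rp R p) R)
  (rho : 'rV[R]_p -> R) (alpha : R) :
  continuous rho -> (forall a, mu [set y : Rp R p | rho y = a] = 0%E) ->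
  forall eta : R, 0 < eta -> exists r : R, 0 < r /\
    (mu [set y : Rp R p | (`|rho y - alpha| <= r)%R] <= eta%:E)%E.
Proof.
move=> crho C3 eta eta0.
have cf : continuous (fun y => `|rho y - alpha|).
  move=> y; apply: (@continuous_comp _ _ _ (fun y => rho y - alpha) Num.norm).
    apply: (@continuousB _ _ _ rho (cst alpha)); [exact: crho | exact: cst_continuous].
  exact: norm_continuous.
pose S (m : nat) := [set y : Rp R p | `|rho y - alpha| <= m.+1%:R^-1].
have mS m : measurable (S m) by exact: meas_le.
have niS : nonincreasing_seq S.
  apply/nonincreasing_seqP => m; apply/subsetPset => y; rewrite /S /= => H.
  apply: le_trans H _; rewrite lef_pV2 ?posrE // ler_nat; exact: leqnSn.
have capS : \bigcap_m S m `<=` [set y : Rp R p | rho y = alpha].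
  move=> y Sy /=; apply/eqP/negPn/negP => ne.
  have e0 : 0 < `|rho y - alpha| by rewrite normr_gt0 subr_eq0.
  have [N _ HN] := near_infty_natSinv_lt (PosNum e0).
  have h1 := HN N (leqnn N); have h2 := Sy N I; rewrite /S /= in h2.
  by have := lt_le_trans h1 h2; rewrite ltxx.
have mcap : measurable (\bigcap_m S m).
  by apply: bigcap_measurable => *; [exists 0%N | exact: mS].
have P0 : mu (\bigcap_m S m) = 0%E.
  apply/eqP; rewrite eq_le measure_ge0 andbT -(C3 alpha).
  apply: le_measure => //; apply/mem_set => //.
  have -> : [set y : Rp R p | rho y = alpha] = rho @^-1` [set alpha] by [].
  by rewrite -[X in measurable X]setTI; apply: cont_meas.
have S0 : (mu (S 0%N) < +oo)%E.
  exact: le_lt_trans (probability_le1 mu (mS 0%N)) (ltry _).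
have cv : (mu \o S) n @[n --> \oo] --> 0%E.
  by rewrite -P0; exact: nonincreasing_cvg_mu S0 mS mcap niS.
have /fine_cvgP [Hfin Hcv] := cv.
have [N _ HN] := filterI Hfin (cvgr_dist_lt _ _ Hcv _ eta0).
exists N.+1%:R^-1; split; first by rewrite invr_gt0.
have [/= f1 f2] := HN N (leqnn N).
rewrite -(fineK f1) lee_fin; move: f2; rewrite sub0r normrN => f2.
exact: le_trans (ler_norm _) (ltW f2).
Qed.
Lemma bint (R : realType) d (T : measurableType d) (mu : probability T R) (f : T -> R) (M : R) :
  measurable_fun setT f -> (forall y, `|f y| <= M) -> mu.-integrable setT (EFin \o f).
Proof.
move=> mf fM; apply: measurable_bounded_integrable => //.
  exact: le_lt_trans (probability_le1 mu measurableT) (ltry _).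
exists M; split; first exact: num_real.
move=> x Mx y _; exact: le_trans (fM y) (ltW Mx).
Qed.
Lemma Tcont (R : realType) (a e : R) : continuous (fun t : R => 3 - `|t - a| / e).
Proof.
move=> x; apply: cvgB; first exact: cvg_cst.
apply: cvgM; last exact: cvg_cst.
apply: cvg_norm; apply: cvgB; [exact: cvg_id | exact: cvg_cst].
Qed.
Lemma hcont (R : realType) (a e : R) : continuous (fun t : R => (t - a + e) / e).
Proof.
move=> x; apply: cvgM; last exact: cvg_cst.
apply: cvgD; last exact: cvg_cst.
apply: cvgB; [exact: cvg_id | exact: cvg_cst].
Qed.
Lemma ind_bool (T : Type) (P : T -> bool) y : (y \in [set z | P z]) = P y.
Proof. by apply/idP/idP => [/set_mem|H]; [|apply/mem_set]. Qed.
Lemma hf_cont (R : realType) (a e : R) : continuous (hf a e).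
Proof. move=> x; have H := (@continuous_comp _ _ _ (fun t : R => (t - a + e) / e) (@clamp R) x (@hcont R a e x) (clamp_cont _)); exact H. Qed.
Lemma Tf_cont (R : realType) (a e : R) : continuous (Tf a e).
Proof. move=> x; have H := (@continuous_comp _ _ _ (fun t : R => 3 - `|t - a| / e) (@clamp R) x (@Tcont R a e x) (clamp_cont _)); exact H. Qed.

Lemma emp_meas (R : realType) p (d : measure_display) (Omega : measurableType d)
  (Y : nat -> Omega -> Rp R p) (W : nat -> nat -> Omega -> R) (f : 'rV[R]_p -> R) n :
  (forall i, measurable_fun setT (Y i)) ->
  (forall n i, measurable_fun setT (W n i)) -> continuous f ->
  measurable_fun setT (fun w => emp_int W Y n w f).
Proof.
move=> mY mW cf; rewrite /emp_int.
apply: measurable_sum => i.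
apply: measurable_realfun.measurable_funM; first exact: mW.
exact: measurableT_comp (cont_meas cf) (mY i).
Qed.

Lemma cvg_sum0 (R : realType) (I : finType) (a : I -> nat -> R) :
  (forall i, a i n @[n --> \oo] --> 0) -> (\sum_i a i n) @[n --> \oo] --> 0.
Proof.
move=> H; rewrite unlock /=; elim: (index_enum I) => [|i r IH] /=.
  exact: cvg_cst.
rewrite -[0 in X in _ --> X](addr0 0); exact: cvgD.
Qed.

Lemma cvg_dist0 (R : realType) (u : nat -> R) l :
  u n @[n --> \oo] --> l -> `|u n - l| @[n --> \oo] --> 0.
Proof.
move=> H; rewrite -(@normr0 _ R) -(subrr l); apply: cvg_norm; apply: cvgB => //; exact: cvg_cst.
Qed.
Theorem lemma7
  (R : realType) (p : nat)
  (d : measure_display) (Omega : measurableType d) (P : probability Omega R)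
  (* observations Y_i and weights W_{i,n}(x) (as random variables) *)
  (Y : nat -> Omega -> Rp R p)
  (W : nat -> nat -> Omega -> R)
  (* conditional distribution mu(. | x) of Y given X = x *)
  (mu : probability (Rp R p) R)
  (* conditional depth rho(. | x) and its sample version rho_n(. | x) *)
  (rho : 'rV[R]_p -> R)
  (rhon : nat -> Omega -> 'rV[R]_p -> R)
  (alphan : nat -> Omega -> R) (alpha : R) :
  (forall i, measurable_fun setT (Y i)) ->
  (forall n i, measurable_fun setT (W n i)) ->
  (forall n i w, 0 <= W n i w) ->
  (forall n w, (0 < n)%N -> \sum_(i < n) W n i w = 1) ->
  (* rho is uniformly bounded *)
  (exists M : R, forall y, `|rho y| <= M) ->
  (* alpha_n are random variables converging in probability to alpha > 0 *)
  (forall n, measurable_fun setT (alphan n)) ->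
  0 < alpha ->
  cvg_in_prob P alphan (fun _ => alpha) ->
  (* C(iii) *)
  (forall a : R, mu [set y : Rp R p | rho y = a] = 0%E) ->
  (* C(v) *)
  continuous rho ->
  (forall e : R, 0 < e -> exists M : R, forall y : 'rV[R]_p,
      M < `|y| -> `|rho y| < e) ->
  (* (W): mu_n(. | x) -> mu(. | x) weakly, almost surely *)
  {ae P, forall w, forall f : 'rV[R]_p -> R, continuous f ->
      (exists M : R, forall y, `|f y| <= M) ->
      (fun n => (emp_int W Y n w f)%:E) @ \oo --> (\int[mu]_y (f y)%:E)%E} ->
  (* (U): sup_y |rho_n(y|x) - rho(y|x)| -P-> 0 *)
  (forall e : R, 0 < e ->
     outer_prob_to0 P
       (fun n => [set w | exists y : 'rV[R]_p, e < `|rhon n w y - rho y|])) ->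
  (* conclusion *)
  cvg_in_prob P
    (fun n w => \row_(j < p)
        emp_int W Y n w
          (fun y => y 0 j * \1_[set z | alphan n w <= rhon n w z] y))
    (fun _ => \row_(j < p)
        Rintegral mu setT
          (fun y : Rp R p => y 0 j * \1_[set z | alpha <= rho z] y)).
Proof.
move=> mY mW W0 W1 _ malpha alpha0 Halpha C3 crho Cinf HW HU e e0 delta d0.
have a4 : 0 < alpha / 4 by rewrite divr_gt0.
have [M HM] := Cinf _ a4.
pose K := `|M|.
have K0 : 0 <= K by rewrite /K.
have bnd : forall y : 'rV[R]_p, alpha / 4 <= rho y -> `|y| <= K.
  move=> y Hy; rewrite leNgt; apply/negP => Hlt.
  have := HM y (le_lt_trans (ler_norm M) Hlt).
  by rewrite ltNge => /negP; apply; exact: le_trans Hy (ler_norm _).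
pose eta := e / (4 * (K + 1)).
have eta0 : 0 < eta by rewrite /eta divr_gt0 // mulr_gt0 // ltr_wpDl.
have Keta : K * eta + eta = e / 4.
  have K1 : 0 < K + 1 by lra.
  by rewrite /eta; field; exact: lt0r_neq0.
have [r [r0 Hr]] := small_shell _ _ mu rho alpha crho C3 eta eta0.
pose eps := Num.min (alpha / 4) (r / 3).
have eps0 : 0 < eps by rewrite /eps lt_min a4 divr_gt0.
have eps_a : 4 * eps <= alpha.
  have : eps <= alpha / 4 by rewrite /eps ge_min lexx.
  lra.
have eps_r : 3 * eps <= r.
  have : eps <= r / 3 by rewrite /eps ge_min lexx orbT.
  lra.
pose h := hf alpha eps.
pose tau := fun y : 'rV[R]_p => Tf alpha eps (rho y).
pose g := fun j (y : 'rV[R]_p) => y 0 j * h (rho y).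
pose fI := fun j (y : Rp R p) => y 0 j * \1_[set z | alpha <= rho z] y.
pose L := fun f : Rp R p -> R => Rintegral mu setT f.
have ctau : continuous tau.
  move=> y; have H := (@continuous_comp _ _ _ rho (Tf alpha eps) y (crho y) (Tf_cont _ _ _ (rho y))).
  exact H.
have cg : forall j, continuous (g j).
  move=> j y; apply: (@continuousM _ _ (fun y : 'rV[R]_p => y 0 j) (fun y => h (rho y))).
    exact: coord_cont.
  have H := (@continuous_comp _ _ _ rho h y (crho y) (hf_cont _ _ _ (rho y))).
  exact H.
have tau01 : forall y, 0 <= tau y <= 1.
  by move=> y; rewrite /tau /Tf clamp_ge0 clamp_le1.
have btau : forall y, `|tau y| <= 1.
  by move=> y; have /andP[t0 t1] := tau01 y; rewrite ger0_norm.
have h0 : forall u, u < alpha / 4 -> h u = 0.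
  move=> u Hu; apply: clamp0; rewrite pmulr_lle0 ?invr_gt0 //; lra.
have hb : forall u, 0 <= h u <= 1 by move=> u; rewrite clamp_ge0 clamp_le1.
have bg : forall j y, `|g j y| <= K.
  move=> j y; rewrite /g normrM.
  have [Hy|Hy] := lerP (alpha / 4) (rho y).
    have := bnd y Hy; have := coord_le y j; have /andP[u0 u1] := hb (rho y).
    rewrite (ger0_norm u0) => H1 H2.
    rewrite -[K]mulr1; apply: ler_pM => //; exact: le_trans H1 H2.
  by rewrite h0 // normr0 mulr0.
have bfI : forall j y, `|fI j y| <= K.
  move=> j y; rewrite /fI normrM indicE (@ind_bool _ (fun z => alpha <= rho z)).
  case: (leP alpha (rho y)) => Hy; last by rewrite normr0 mulr0.
  rewrite normr1 mulr1; apply: le_trans (coord_le y j) _; apply: bnd; lra.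
have mI : measurable [set z : Rp R p | alpha <= rho z] by exact: meas_ge.
have mtau : measurable_fun setT (tau : Rp R p -> R) by exact: cont_meas.
have mg : forall j, measurable_fun setT (g j : Rp R p -> R) by move=> j; exact: cont_meas.
have mfI : forall j, measurable_fun setT (fI j).
  move=> j; apply: measurable_realfun.measurable_funM.
    exact: cont_meas (coord_cont _ _ j).
  exact: measurable_realfun.measurable_indic.
have itau : mu.-integrable setT (EFin \o (tau : Rp R p -> R)) by exact: bint mtau btau.
have ig : forall j, mu.-integrable setT (EFin \o (g j : Rp R p -> R)).
  by move=> j; exact: bint (mg j) (bg j).
have ifI : forall j, mu.-integrable setT (EFin \o fI j).
  by move=> j; exact: bint (mfI j) (bfI j).
have Lfin : forall f : Rp R p -> R, mu.-integrable setT (EFin \o f) ->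
    (\int[mu]_y (f y)%:E)%E = (L f)%:E.
  by move=> f If; rewrite /L /Rintegral fineK //; exact: integrable_fin_num.
have empcvg : forall w f, (forall f : 'rV[R]_p -> R, continuous f ->
      (exists M : R, forall y, `|f y| <= M) ->
      (fun n => (emp_int W Y n w f)%:E) @ \oo --> (\int[mu]_y (f y)%:E)%E) ->
    continuous f -> (forall y, `|f y| <= K + 1) ->
    emp_int W Y n w f @[n --> \oo] --> L f.
  move=> w f Hw cf bf.
  have := Hw f cf (ex_intro _ _ bf).
  rewrite Lfin; last by apply: bint (cont_meas cf) bf.
  move=> H; have H2 := fine_cvg (FF := eventually_filter) H; exact H2.
pose F := fun n w => K * `|emp_int W Y n w tau - L tau| +
  \sum_(j < p) `|emp_int W Y n w (g j) - L (g j)|.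
have mabs : forall f : 'rV[R]_p -> R, continuous f -> forall n c,
    measurable_fun setT (fun w => `|emp_int W Y n w f - c|).
  move=> f cf n c; apply: measurableT_comp (@measurable_realfun.normr_measurable R setT) _.
  apply: measurable_realfun.measurable_funB; last exact: measurable_cst.
  exact: emp_meas.
have mF : forall n, measurable_fun setT (F n).
  move=> n; apply: measurable_realfun.measurable_funD.
    apply: measurable_realfun.measurable_funM; first exact: measurable_cst.
    exact: mabs.
  by apply: measurable_sum => j; exact: mabs.
have Fcvg : {ae P, forall w, F ^~ w @ \oo --> 0}.
  apply: filterS HW => w Hw.
  rewrite -[0](addr0 0) -{1}(mulr0 K); apply: cvgD.
    apply: cvgMr; apply: cvg_dist0; apply: empcvg => // y.
    apply: le_trans (btau y) _; lra.
  apply: cvg_sum0 => j; apply: cvg_dist0; apply: empcvg => // y.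
  apply: le_trans (bg j y) _; lra.
have e2 : 0 < e / 2 by rewrite divr_gt0.
have d3 : 0 < delta / 3 by rewrite divr_gt0.
have [N3 HN3] := @ae_prob R d Omega P F mF Fcvg (e / 2) (delta / 3) e2 d3.
have [N1 HN1] := HU eps eps0 (delta / 3) d3.
have [N2 HN2] := Halpha eps eps0 (delta / 3) d3.
exists (N1 + N2 + N3)%N => n Nn.
have [A1 [mA1 [sA1 PA1]]] := HN1 n (leq_trans (leq_trans (leq_addr N2 N1) (leq_addr N3 _)) Nn).
have [A2 [mA2 [sA2 PA2]]] := HN2 n (leq_trans (leq_trans (leq_addl N1 N2) (leq_addr N3 _)) Nn).
have [A3 [mA3 [sA3 PA3]]] := HN3 n (leq_trans (leq_addl _ N3) Nn).
exists (A1 `|` A2 `|` A3); split; first by apply: measurableU => //; apply: measurableU.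
split; last first.
  have H := measureU2 P (measurableU _ _ mA1 mA2) mA3.
  apply: le_trans H _.
  apply: le_trans (leeD (measureU2 _ mA1 mA2) (lexx _)) _.
  apply: le_trans (leeD (leeD PA1 PA2) PA3) _.
  rewrite -!EFinD lee_fin; lra.
move=> w /= Hw.
have [?|nA1] := pselect (A1 w); first by left; left.
have [?|nA2] := pselect (A2 w); first by left; right.
have [?|nA3] := pselect (A3 w); first by right.
exfalso; move: Hw; apply/negP; rewrite -leNgt.
have Hr1 : forall y, `|rhon n w y - rho y| <= eps.
  move=> y; rewrite leNgt; apply/negP => H; apply: nA1; apply: sA1; by exists y.
have Ha : `|alphan n w - alpha| <= eps.
  rewrite leNgt; apply/negP => H; exact: nA2 (sA2 _ H).
have HF : F n w <= e / 2.
  have : `|F n w| <= e / 2 by rewrite leNgt; apply/negP => H; exact: nA3 (sA3 _ H).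
  exact: le_trans (ler_norm _).
apply: norm_le; first lra.
move=> j; rewrite !mxE.
set A := emp_int W Y n w _.
set B := Rintegral _ _ _.
have -> : B = L (fI j) by [].
pose eT := emp_int W Y n w tau.
pose eg := emp_int W Y n w (g j).
have i1 : `|A - eg| <= K * eT.
  rewrite /A /eg /emp_int -sumrB.
  apply: le_trans (ler_norm_sum _ _ _) _.
  rewrite /eT /emp_int mulr_sumr; apply: ler_sum => i _.
  rewrite -mulrBr normrM (ger0_norm (W0 n i w)) mulrCA; apply: ler_wpM2l => //.
  rewrite indicE (@ind_bool _ (fun z => alphan n w <= rhon n w z)).
  apply: (PA eps0 eps_a K0 _ (Hr1 _) Ha) => // Hy.
  exact: le_trans (coord_le _ j) (bnd _ Hy).
have i2 : `|eg - L (g j)| <= \sum_(j0 < p) `|emp_int W Y n w (g j0) - L (g j0)|.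
  by rewrite (bigD1 j) //= lerDl; apply: sumr_ge0 => i _; exact: normr_ge0.
have i3 : `|L (g j) - L (fI j)| <= K * L tau.
  have mgf : measurable_fun setT (fun y : Rp R p => g j y - fI j y).
    exact: measurable_realfun.measurable_funB (mg j) (mfI j).
  have bgf : forall y : Rp R p, `|g j y - fI j y| <= K + K.
    move=> y; apply: le_trans (ler_normB _ _) _; exact: lerD.
  have igf := bint _ _ _ mu _ _ mgf bgf.
  have mKt : measurable_fun setT (fun y : Rp R p => K * tau y).
    by apply: measurable_realfun.measurable_funM => //; exact: measurable_cst.
  have bKt : forall y : Rp R p, `|K * tau y| <= K.
    by move=> y; rewrite normrM ger0_norm // -{2}[K]mulr1 ler_wpM2l.
  have iKt := bint _ _ _ mu _ _ mKt bKt.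
  rewrite /L -(RintegralB measurableT (ig j) (ifI j)).
  apply: le_trans (le_normr_Rintegral measurableT igf) _.
  rewrite -(RintegralZl _ measurableT itau).
  apply: (le_Rintegral measurableT (integrable_norm igf) iKt).
  move=> y _ /=.
  rewrite /fI /g -normrN opprB indicE (@ind_bool _ (fun z => alpha <= rho z)).
  apply: (PA (rn := rho y) (a := alpha) eps0 eps_a K0).
  - move=> Hy; exact: le_trans (coord_le _ j) (bnd _ Hy).
  - by rewrite subrr normr0 ltW.
  - by rewrite subrr normr0 ltW.
  - by [].
have i4 : L tau <= eta.
  pose S := [set y : Rp R p | (`|rho y - alpha| <= r)%R].
  have cf : continuous (fun y : 'rV[R]_p => `|rho y - alpha|).
    move=> y; apply: (@continuous_comp _ _ _ (fun y => rho y - alpha) Num.norm).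
      apply: (@continuousB _ _ _ rho (cst alpha)); [exact: crho | exact: cst_continuous].
    exact: norm_continuous.
  have mS : measurable S by exact: meas_le.
  rewrite -lee_fin -(Lfin _ itau); apply: le_trans _ Hr.
  have -> : mu [set y : Rp R p | (`|rho y - alpha| <= r)%R] = mu (S `&` setT) by rewrite setIT.
  rewrite -(integral_indic _ measurableT mS).
  apply: ge0_le_integral => //.
  - by move=> y _; rewrite lee_fin; have /andP[] := tau01 y.
  - exact/measurable_realfun.measurable_EFinP.
  - exact/measurable_realfun.measurable_EFinP/measurable_realfun.measurable_indic.
  - move=> y _; rewrite lee_fin indicE.
    have [yS|yS] := boolP (y \in S); first by have /andP[] := tau01 y.
    rewrite /tau /Tf clamp0 //.
    have : ~ S y by move=> Sy; move/negP: yS; apply; exact/mem_set.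
    rewrite /S /= => /negP; rewrite -ltNge => Hy.
    rewrite subr_le0 ler_pdivlMr //; lra.
have i5 : eT <= L tau + `|eT - L tau|.
  have := ler_norm (eT - L tau); lra.
have kk : K * eT <= K * L tau + K * `|eT - L tau| by rewrite -mulrDr ler_wpM2l.
have kk2 : K * L tau <= K * eta by rewrite ler_wpM2l.
have tri : `|A - L (fI j)| <= `|A - eg| + `|eg - L (g j)| + `|L (g j) - L (fI j)|.
  rewrite (_ : A - L (fI j) = (A - eg) + (eg - L (g j)) + (L (g j) - L (fI j))); last by ring.
  apply: le_trans (ler_normD _ _) _; rewrite lerD2r; exact: ler_normD.
rewrite /F -/eT in HF.
lra.
Qed.
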